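(* Let $\phi$ be a (Lie group) endomorphism of $G$, and define maps $\alpha:\mathbb R^n\to\mathbb R^n$, $\beta:\mathbb R^m\to\mathbb R^n$, $\gamma:\mathbb R^n\to\mathbb R^m$, $\delta:\mathbb R^m\to\mathbb R^m$ by $$\phi(x,0)=(\alpha(x),\gamma(x)),\qquad \phi(0,t)=(\beta(t),\delta(t)),$$ i.e. $\alpha=\pi_{\mathbb R^n}\circ\phi\circ j_{\mathbb R^n}$, $\beta=\pi_{\mathbb R^n}\circ\phi\circ j_{\mathbb R^m}$, $\gamma=\pi_{\mathbb R^m}\circ\phi\circ j_{\mathbb R^n}$, $\delta=\pi_{\mathbb R^m}\circ\phi\circ j_{\mathbb R^m}$, where $\pi$ and $j$ denote the projections onto and injections from the indicated factors of $\mathbb R^n\times\mathbb R^m$. Then $\phi$ is an automorphism of $G$ if and only if the following conditions hold: 1) $\alpha$ is the linear map with matrix $P_\tau\,\mathrm{diag}(c_1,\dots,c_n)$ for some nonzero real numbers $c_1,\dots,c_n$ and some permutation $\tau\in S_n$; 2) $\gamma=0$; 3) $\delta$ is the linear map with matrix $\left({}^t\Omega\,\Omega\right)^{-1}{}^t\Omega\,P_\tau\,\Omega$ (with the same $\tau$); 4) $\beta(t)=\sum_{k=0}^{\infty}\frac{(\delta(t)\cdot\Delta)^k}{(k+1)!}\,U t$ for all $t\in\mathbb R^m$, for some $U\in\mathbb R^{n\times m}$.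
   Context: Fix integers $1\le m\le n$. Let $\Delta_1,\dots,\Delta_m\in\mathbb R^{n\times n}$ be linearly independent, nonsingular, traceless diagonal matrices $\Delta_i=\mathrm{diag}(d_1^{(i)},\dots,d_n^{(i)})$ such that for each $i$, $d_k^{(i)}\neq d_j^{(i)}$ whenever $k\neq j$. For $t=(t_1,\dots,t_m)^T\in\mathbb R^m$ write $t\cdot\Delta=\sum_{i=1}^m t_i\Delta_i$ and $\eta(t)=e^{t\cdot\Delta}$. Let $G=\mathbb R^n\rtimes_\eta\mathbb R^m$ be the Lie group with underlying set $\mathbb R^n\times\mathbb R^m$ and multiplication $(x,t)(y,s)=(x+e^{t\cdot\Delta}y,\ t+s)$. Let $\Omega\in\mathbb R^{n\times m}$ be the matrix with entries $\Omega_{ij}=d_i^{(j)}$ (it is injective, so ${}^t\Omega\Omega$ is invertible). For $\tau\in S_n$ (permutations of $\{1,\dots,n\}$), $P_\tau$ denotes the permutation matrix obtained from $I_n$ by replacing, for each $1\le i\le n$, the $i$-th row by the $\tau^{-1}(i)$-th row. *)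

(* Defs.v *)
From HB Require Import structures.
From mathcomp Require Import all_boot all_order all_algebra all_fingroup.
From mathcomp Require Import all_classical all_reals all_analysis.
Set Implicit Arguments. Unset Strict Implicit. Unset Printing Implicit Defensive.
Import Order.TTheory GRing.Theory Num.Theory.
Import numFieldNormedType.Exports.
Local Open Scope ring_scope.

Section Defs.
Variables (R : realType) (n m : nat).

Definition tDelta (Delta : 'I_m -> 'M[R]_n) (t : 'cV[R]_m) : 'M[R]_n :=
  \sum_(i < m) t i 0 *: Delta i.

(* eta(t) = e^{t . Delta}; since t . Delta is diagonal, its exponential is the
   diagonal matrix of the exponentials of its diagonal entries. *)
Definition eta (Delta : 'I_m -> 'M[R]_n) (t : 'cV[R]_m) : 'M[R]_n :=
  diag_mx (\row_k expR (tDelta Delta t k k)).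

Definition Gmul (Delta : 'I_m -> 'M[R]_n) (g h : 'cV[R]_n * 'cV[R]_m)
  : 'cV[R]_n * 'cV[R]_m :=
  (g.1 + eta Delta g.2 *m h.1, g.2 + h.2).

Definition Omega (Delta : 'I_m -> 'M[R]_n) : 'M[R]_(n, m) :=
  \matrix_(i, j) Delta j i i.

End Defs.

Definition Pperm (R : realType) (n : nat) (tau : 'S_n) : 'M[R]_n :=
  \matrix_(i, j) ((tau^-1)%g i == j)%:R.

Definition Delta_hyp (R : realType) (n m : nat) (Delta : 'I_m -> 'M[R]_n) : Prop :=
  (1 <= m <= n)%N /\ (forall i, is_diag_mx (Delta i)) /\
  [/\ (forall a : 'I_m -> R, \sum_(i < m) a i *: Delta i = 0 -> forall i, a i = 0),
      (forall i, Delta i \in unitmx),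
      (forall i, \tr (Delta i) = 0) &
      (forall i (k j : 'I_n), k != j -> Delta i k k != Delta i j j)].

Definition G_endo (R : realType) (n m : nat) (Delta : 'I_m -> 'M[R]_n)
  (phi : 'cV[R]_n * 'cV[R]_m -> 'cV[R]_n * 'cV[R]_m) : Prop :=
  continuous phi /\
  forall g h, phi (Gmul Delta g h) = Gmul Delta (phi g) (phi h).

Definition G_auto (R : realType) (n m : nat) (Delta : 'I_m -> 'M[R]_n)
  (phi : 'cV[R]_n * 'cV[R]_m -> 'cV[R]_n * 'cV[R]_m) : Prop :=
  G_endo Delta phi /\
  exists psi, [/\ G_endo Delta psi, cancel phi psi & cancel psi phi].

(* Main.v *)
Require Import Defs.
From HB Require Import structures.
From mathcomp Require Import all_boot all_order all_algebra all_fingroup.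
From mathcomp Require Import all_classical all_reals all_analysis.
From mathcomp Require Import ring lra.
Import Order.TTheory GRing.Theory Num.Theory.
Import numFieldNormedType.Exports.
Local Open Scope ring_scope.
Local Open Scope classical_set_scope.
Set Implicit Arguments. Unset Strict Implicit. Unset Printing Implicit Defensive.

Section Basic.
Variables (R : realType) (n m : nat) (Delta : 'I_m -> 'M[R]_n).
Local Notation tD := (tDelta Delta).
Local Notation et := (Defs.eta Delta).
Local Notation Om := (Omega Delta).

Lemma tDeltaE (t : 'cV[R]_m) k : tD t k k = (Om *m t) k 0.
Proof.
rewrite /tDelta summxE !mxE; apply: eq_bigr => i _; rewrite !mxE mulrC.
by [].
Qed.

Lemma tDeltaD (t s : 'cV[R]_m) : tD (t + s) = tD t + tD s.
Proof. by rewrite /tDelta -big_split; apply: eq_bigr => i _; rewrite mxE scalerDl. Qed.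

Lemma tDelta0 : tD 0 = 0.
Proof. by rewrite /tDelta big1 // => i _; rewrite mxE scale0r. Qed.

Lemma eta_mulE (t : 'cV[R]_m) (x : 'cV[R]_n) k : (et t *m x) k 0 = expR (tD t k k) * x k 0.
Proof. by rewrite /Defs.eta mul_diag_mx !mxE. Qed.

Lemma eta0 : et 0 = 1%:M.
Proof. by rewrite /Defs.eta tDelta0; apply/matrixP => i j; rewrite !mxE expR0. Qed.

Lemma eta0_mul (x : 'cV[R]_n) : et 0 *m x = x.
Proof. by rewrite eta0 mul1mx. Qed.

Lemma diag_nz : Delta_hyp Delta -> forall i k, Delta i k k != 0.
Proof.
move=> [_ [Hd [_ Hu _ _]]] i k; apply/negP => /eqP H0.
have : Delta i *m (delta_mx k 0 : 'cV[R]_n) = 0.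
  apply/matrixP => j l; rewrite -colE !mxE.
  have [->|jk] := eqVneq j k; first by [].
  by move/is_diag_mxP: (Hd i) => ->.
move=> /(congr1 (mulmx (invmx (Delta i)))); rewrite mulKmx // mulmx0.
by move/matrixP => /(_ k 0) /eqP; rewrite !mxE !eqxx /= oner_eq0.
Qed.

Lemma tDelta_delta i k : tD (delta_mx i 0) k k = Delta i k k.
Proof. by rewrite tDeltaE -colE !mxE. Qed.

End Basic.


Section Endo.
Variables (R : realType) (n m : nat) (Delta : 'I_m -> 'M[R]_n).
Local Notation tD := (tDelta Delta).
Local Notation et := (Defs.eta Delta).
Local Notation Om := (Omega Delta).
Variable phi : 'cV[R]_n * 'cV[R]_m -> 'cV[R]_n * 'cV[R]_m.
Hypothesis hom : forall g h, phi (Gmul Delta g h) = Gmul Delta (phi g) (phi h).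
Local Notation al x := (phi (x, 0)).1.
Local Notation ga x := (phi (x, 0)).2.
Local Notation be t := (phi (0, t)).1.
Local Notation de t := (phi (0, t)).2.

Lemma phi_split x t : phi (x, t) = Gmul Delta (phi (x, 0)) (phi (0, t)).
Proof.
have -> : (x, t) = Gmul Delta (x, 0) (0, t) by rewrite /Gmul /= mulmx0 addr0 add0r.
exact: hom.
Qed.

Lemma phi00 : phi (0, 0) = (0, 0).
Proof.
have := hom (0, 0) (0, 0).
have -> : Gmul Delta (0, 0) (0, 0) = (0, 0) by rewrite /Gmul /= mulmx0 !addr0.
case: (phi (0, 0)) => a b; rewrite /Gmul /= => -[Ha Hb].
have b0 : b = 0 by move: Hb; rewrite -{1}[b]addr0 => /addrI.
move: Ha; rewrite b0 eta0_mul -{1}[a]addr0 => /addrI <-.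
by [].
Qed.

Lemma ga0 : ga 0 = 0.
Proof. by rewrite phi00. Qed.
Lemma al0 : al 0 = 0.
Proof. by rewrite phi00. Qed.
Lemma be0 : be 0 = 0.
Proof. by rewrite phi00. Qed.
Lemma de0 : de 0 = 0.
Proof. by rewrite phi00. Qed.

Lemma hom_x x y : phi (x + y, 0) = Gmul Delta (phi (x, 0)) (phi (y, 0)).
Proof.
have <- : Gmul Delta (x, 0) (y, 0) = (x + y, 0) by rewrite /Gmul /= eta0_mul addr0.
exact: hom.
Qed.

Lemma hom_t t s : phi (0, t + s) = Gmul Delta (phi (0, t)) (phi (0, s)).
Proof.
have <- : Gmul Delta (0, t) (0, s) = (0, t + s) by rewrite /Gmul /= mulmx0 addr0.
exact: hom.
Qed.

Lemma ga_add x y : ga (x + y) = ga x + ga y.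
Proof. by rewrite hom_x. Qed.

Lemma ga_opp x : ga (- x) = - ga x.
Proof.
apply/eqP; rewrite -subr_eq0 opprK -ga_add addNr ga0 //.
Qed.

Lemma comm_rel t x :
  Gmul Delta (phi (0, t)) (phi (x, 0)) =
  Gmul Delta (phi (et t *m x, 0)) (phi (0, t)).
Proof.
rewrite -!hom /Gmul /= mulmx0 !addr0 add0r.
by rewrite add0r.
Qed.

Lemma ga_eta t x : ga (et t *m x) = ga x.
Proof.
have H := congr1 snd (comm_rel t x); move: H; rewrite /Gmul /= => H.
by apply: (addrI (de t)); rewrite H addrC.
Qed.

Lemma ga_zero : Delta_hyp Delta -> forall x, ga x = 0.
Proof.
move=> hD y.
have [/andP[m1 _] _] := hD.
pose i0 : 'I_m := Ordinal m1.
pose t0 : 'cV[R]_m := delta_mx i0 0.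
have ne1 k : expR (tD t0 k k) - 1 != 0.
  rewrite subr_eq0 tDelta_delta -expR0; apply/negP => /eqP /expR_inj.
  by move/eqP; rewrite (negbTE (diag_nz hD _ _)).
pose x := \col_k (y k 0 / (expR (tD t0 k k) - 1)).
have -> : y = et t0 *m x - x.
  apply/matrixP => k j; rewrite (ord1 j) [in RHS]mxE eta_mulE !mxE.
  by rewrite -[X in _ - X]mul1r -mulrBl mulrC divfK.
by rewrite ga_add ga_opp ga_eta subrr.
Qed.

End Endo.

Section Endo2.
Variables (R : realType) (n m : nat) (Delta : 'I_m -> 'M[R]_n).
Local Notation tD := (tDelta Delta).
Local Notation et := (Defs.eta Delta).
Local Notation Om := (Omega Delta).
Variable phi : 'cV[R]_n * 'cV[R]_m -> 'cV[R]_n * 'cV[R]_m.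
Hypothesis hom : forall g h, phi (Gmul Delta g h) = Gmul Delta (phi g) (phi h).
Hypothesis gz : forall x, (phi (x, 0)).2 = 0.
Local Notation al x := (phi (x, 0)).1.
Local Notation be t := (phi (0, t)).1.
Local Notation de t := (phi (0, t)).2.

Lemma phi_x x : phi (x, 0) = (al x, 0).
Proof. by have := gz x; case: (phi (x, 0)) => a b /= ->. Qed.

Lemma phi_xt x t : phi (x, t) = (al x + be t, de t).
Proof. by rewrite (phi_split hom) /Gmul /= gz eta0_mul add0r. Qed.

Lemma al_add x y : al (x + y) = al x + al y.
Proof. by rewrite (hom_x hom) /Gmul /= gz eta0_mul. Qed.

Lemma de_add t s : de (t + s) = de t + de s.
Proof. by rewrite (hom_t hom). Qed.

Lemma be_cocycle t s : be (t + s) = be t + et (de t) *m be s.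
Proof. by rewrite (hom_t hom). Qed.

Lemma al_eta t x : al (et t *m x) = et (de t) *m al x.
Proof.
have := congr1 fst (comm_rel hom t x); rewrite /Gmul /= gz eta0_mul addrC.
by move/addIr ->.
Qed.

Lemma al_opp x : al (- x) = - al x.
Proof.
by apply/eqP; rewrite -subr_eq0 opprK -al_add addNr (al0 hom).
Qed.

End Endo2.


Lemma addhom (R : realType) (h : R -> R) :
  (forall a b, h (a + b) = h a + h b) -> h 1 = 1 ->
  (forall r, 0 < r -> 0 < h r) -> forall r, h r = r.
Proof.
move=> hD h1 hpos.
have h0 : h 0 = 0.
  by have := hD 0 0; rewrite addr0 -{1}[h 0]addr0 => /addrI <-.
have hN x : h (- x) = - h x.
  by apply/eqP; rewrite -subr_eq0 opprK -hD addNr h0.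
have hB x y : h (x - y) = h x - h y by rewrite hD hN.
have hn k : h k%:R = k%:R.
  by elim: k => [|k IH]; rewrite ?h0 // -natr1 hD IH h1.
have hmono x y : x < y -> h x < h y.
  by move=> xy; rewrite -subr_gt0 -hB hpos // subr_gt0.
have bnd p : 0 < p -> `|h p - p| <= 1.
  move=> p0; rewrite ler_norml; apply/andP; split.
    rewrite lerBrDr leNgt; apply/negP => H.
    have q0 := hpos p p0.
    have z1 := truncnS_gt (h p).
    have z2 : (Num.truncn (h p)).+1%:R <= h p + 1.
      by rewrite -natr1 lerD2r truncn_le ltW.
    have : (Num.truncn (h p)).+1%:R < p.
      by apply: (le_lt_trans z2); rewrite -ltrBrDr addrC.
    move/hmono; rewrite hn => /(lt_trans z1); by rewrite ltxx.
  rewrite lerBlDr leNgt; apply/negP => H.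
  have z1 := truncnS_gt p.
  have z2 : (Num.truncn p).+1%:R <= p + 1.
    by rewrite -natr1 lerD2r truncn_le ltW.
  move/hmono: z1; rewrite hn => H2.
  have H' : p + 1 < h p by rewrite addrC.
  by have := le_lt_trans z2 (lt_trans H' H2); rewrite ltxx.
have hmul k x : h (k%:R * x) = k%:R * h x.
  by elim: k => [|k IH]; rewrite ?mul0r ?h0 // -natr1 !mulrDl !mul1r hD IH.
have hposr r : 0 < r -> h r = r.
  move=> r0; apply/eqP; rewrite -subr_eq0; apply/negP => /negP ne.
  have e0 : 0 < `|h r - r| by rewrite normr_gt0.
  pose N := (Num.truncn (`|h r - r|^-1)).+1.
  have HN : `|h r - r|^-1 < N%:R by apply: truncnS_gt.
  have := bnd (N%:R * r) (mulr_gt0 (ltr0Sn _ _) r0).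
  rewrite hmul -mulrBr normrM ger0_norm ?ler0n //.
  rewrite -(ltr_pM2r e0) mulVf ?lt0r_neq0 // in HN.
  by rewrite leNgt HN.
move=> r; have [r0|r0|->] := ltgtP r 0; last by rewrite h0.
  by rewrite -[r]opprK hN hposr ?oppr_gt0.
exact: hposr.
Qed.

Lemma addf0 (R : realType) (f : R -> R) :
  (forall a b, f (a + b) = f a + f b) -> f 0 = 0.
Proof. by move=> hD; have := hD 0 0; rewrite addr0 -{1}[f 0]addr0 => /addrI <-. Qed.

Lemma addfN (R : realType) (f : R -> R) :
  (forall a b, f (a + b) = f a + f b) -> forall x, f (- x) = - f x.
Proof.
by move=> hD x; apply/eqP; rewrite -subr_eq0 opprK -hD addNr (addf0 hD).
Qed.

Lemma addhom2 (R : realType) (f : R -> R) :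
  (forall a b, f (a + b) = f a + f b) ->
  (forall r, 0 < r -> exists u, f r = expR u * f 1) -> forall r, f r = r * f 1.
Proof.
move=> hD hpos r.
have [f10|f1n0] := eqVneq (f 1) 0.
  rewrite f10 mulr0.
  have hp s : 0 < s -> f s = 0 by move=> /hpos [u ->]; rewrite f10 mulr0.
  have [r0|r0|->] := ltgtP r 0; last by rewrite (addf0 hD).
    by rewrite -[r]opprK (addfN hD) hp ?oppr0 ?oppr_gt0.
  exact: hp.
pose h x := f x / f 1.
have Hh : forall x, h x = x.
  apply: addhom; rewrite /h.
  - by move=> a b; rewrite hD mulrDl.
  - by rewrite divff.
  - by move=> s /hpos [u ->]; rewrite mulfK // expR_gt0.
by move: (Hh r) => /(congr1 (fun y => y * f 1)); rewrite /h divfK.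
Qed.


Section Lin.
Variables (R : realType) (n m : nat) (Delta : 'I_m -> 'M[R]_n).
Local Notation tD := (tDelta Delta).
Local Notation et := (Defs.eta Delta).
Local Notation Om := (Omega Delta).

Lemma tDeltaZ (s : R) (t : 'cV[R]_m) k : tD (s *: t) k k = s * tD t k k.
Proof. by rewrite !tDeltaE -scalemxAr mxE. Qed.

Lemma eta_e (t : 'cV[R]_m) k :
  et t *m (delta_mx k 0 : 'cV[R]_n) = expR (tD t k k) *: delta_mx k 0.
Proof.
apply/matrixP => l j; rewrite (ord1 j) eta_mulE [RHS]mxE !mxE eqxx andbT.
by have [->|lk] := eqVneq l k; rewrite ?mulr1 ?mulr0.
Qed.

Lemma col_sum_delta (x : 'cV[R]_n) :
  x = \sum_(k < n) x k 0 *: (delta_mx k 0 : 'cV[R]_n).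
Proof.
rewrite {1}(matrix_sum_delta x); apply: eq_bigr => k _.
by rewrite big_ord1.
Qed.

Variable phi : 'cV[R]_n * 'cV[R]_m -> 'cV[R]_n * 'cV[R]_m.
Hypothesis hom : forall g h, phi (Gmul Delta g h) = Gmul Delta (phi g) (phi h).
Hypothesis gz : forall x, (phi (x, 0)).2 = 0.
Hypothesis hD : Delta_hyp Delta.
Local Notation al x := (phi (x, 0)).1.
Local Notation be t := (phi (0, t)).1.
Local Notation de t := (phi (0, t)).2.

Definition amx : 'M[R]_n := \matrix_(j, k) (al (delta_mx k 0 : 'cV[R]_n)) j 0.

Lemma amxE j k : amx j k = (al (delta_mx k 0 : 'cV[R]_n)) j 0.
Proof. by rewrite mxE. Qed.

Lemma al_scale (r : R) k j :
  (al (r *: (delta_mx k 0 : 'cV[R]_n))) j 0 = r * amx j k.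
Proof.
rewrite mxE.
pose f r := (al (r *: (delta_mx k 0 : 'cV[R]_n))) j 0.
have -> : (al (delta_mx k 0 : 'cV[R]_n)) j 0 = f 1 by rewrite /f scale1r.
apply: addhom2 => [a b|s s0].
  by rewrite /f scalerDl (al_add hom gz) mxE.
have [/andP[m1 _] _] := hD.
pose i0 : 'I_m := Ordinal m1.
have dnz := diag_nz hD i0 k.
pose t := (ln s / Delta i0 k k) *: (delta_mx i0 0 : 'cV[R]_m).
have Ht : et t *m (delta_mx k 0 : 'cV[R]_n) = s *: (delta_mx k 0 : 'cV[R]_n).
  rewrite eta_e tDeltaZ tDelta_delta divfK // lnK //.
exists (tD (de t) j j).
by rewrite /f -Ht (al_eta hom gz) eta_mulE scale1r.
Qed.

Lemma al_lin x : al x = amx *m x.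
Proof.
rewrite {1}(col_sum_delta x).
rewrite (big_morph (fun x => (phi (x, 0)).1) (al_add hom gz) (al0 hom)).
apply/matrixP => j i; rewrite (ord1 i) summxE !mxE.
by apply: eq_bigr => k _; rewrite al_scale mulrC.
Qed.

Lemma KR (t : 'cV[R]_m) j k : amx j k != 0 -> tD t k k = tD (de t) j j.
Proof.
move=> nz; have := al_eta hom gz t (delta_mx k 0).
rewrite eta_e => /matrixP /(_ j 0).
rewrite al_scale eta_mulE -amxE => H.
by apply: expR_inj; apply: (mulIf nz).
Qed.

End Lin.


Section Om.
Variables (R : realType) (n m : nat) (Delta : 'I_m -> 'M[R]_n).
Local Notation tD := (tDelta Delta).
Local Notation Om := (Omega Delta).
Hypothesis hD : Delta_hyp Delta.

Lemma Om_inj (t : 'cV[R]_m) : Om *m t = 0 -> t = 0.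
Proof.
move=> H.
have [_ [Hdg [Hli _ _ _]]] := hD.
have H0 : \sum_(i < m) t i 0 *: Delta i = 0.
  apply/matrixP => k l; rewrite summxE mxE.
  have [<-|kl] := eqVneq k l.
    by have := tDeltaE Delta t k; rewrite H mxE /tDelta summxE.
  rewrite big1 // => i _; rewrite mxE.
  by move/is_diag_mxP: (Hdg i) => ->; rewrite ?mulr0.
apply/matrixP => i j; rewrite (ord1 j) mxE.
exact: (Hli (fun i => t i 0) H0 i).
Qed.

Lemma unit_OmTOm : Om^T *m Om \in unitmx.
Proof.
rewrite -row_free_unit -kermx_eq0; apply/eqP/row_matrixP => i.
set K := kermx _.
have Hw : row i K *m (Om^T *m Om) = 0 by rewrite -row_mul mulmx_ker row0.
set w := row i K in Hw *.
set u := w *m Om^T.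
have Hu : u *m u^T = 0 by rewrite /u trmx_mul trmxK mulmxA -(mulmxA w) Hw mul0mx.
have u0 : u = 0.
  apply/rowP => j; rewrite [in RHS]mxE.
  have Hs := congr1 (fun M : 'M[R]_1 => M 0 0) Hu; rewrite /= [LHS]mxE [RHS]mxE in Hs.
  have Hp : forall k : 'I_n, true -> 0 <= u 0 k * u^T k 0.
    by move=> k _; rewrite [u^T _ _]mxE -expr2 sqr_ge0.
  have := psumr_eq0P Hp Hs (i:=j) isT.
  by rewrite [u^T _ _]mxE => /eqP; rewrite mulf_eq0 orbb => /eqP.
have : Om *m w^T = 0 by rewrite -(trmxK (Om)) -trmx_mul -/u u0 trmx0.
move/Om_inj => /(congr1 trmx); rewrite trmxK trmx0 => ->.
by rewrite row0.
Qed.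

End Om.


Lemma Pperm_mul (R : realType) n p (tau : 'S_n) (y : 'M[R]_(n, p)) j i :
  (Pperm R tau *m y) j i = y ((tau^-1)%g j) i.
Proof.
rewrite mxE (bigD1 ((tau^-1)%g j)) //= big1 ?addr0 ?mxE ?eqxx ?mul1r //.
by move=> l; rewrite mxE eq_sym => /negbTE ->; rewrite mul0r.
Qed.

Lemma Pdiag_mxE (R : realType) n (tau : 'S_n) (c : 'I_n -> R) j k :
  (Pperm R tau *m diag_mx (\row_k c k)) j k = ((tau^-1)%g j == k)%:R * c k.
Proof. by rewrite mul_mx_diag !mxE. Qed.

Lemma mx_ext (R : realType) n (A B : 'M[R]_n) :
  (forall x : 'cV[R]_n, A *m x = B *m x) -> A = B.
Proof.
move=> H; apply/matrixP => j k.
have := H (delta_mx k 0); rewrite -!colE => /matrixP /(_ j 0).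
by rewrite !mxE.
Qed.

Section Mono.
Variables (R : realType) (n m : nat) (Delta : 'I_m -> 'M[R]_n).
Local Notation tD := (tDelta Delta).
Local Notation et := (Defs.eta Delta).
Local Notation Om := (Omega Delta).
Variable phi : 'cV[R]_n * 'cV[R]_m -> 'cV[R]_n * 'cV[R]_m.
Hypothesis hom : forall g h, phi (Gmul Delta g h) = Gmul Delta (phi g) (phi h).
Hypothesis gz : forall x, (phi (x, 0)).2 = 0.
Hypothesis hD : Delta_hyp Delta.
Local Notation al x := (phi (x, 0)).1.
Local Notation be t := (phi (0, t)).1.
Local Notation de t := (phi (0, t)).2.
Local Notation A := (amx phi).

Lemma de_formula (tau : 'S_n) (c : 'I_n -> R) :
  (forall k, c k != 0) -> A = Pperm R tau *m diag_mx (\row_k c k) ->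
  forall t, Om *m de t = Pperm R tau *m Om *m t.
Proof.
move=> cnz HA t; apply/matrixP => j i; rewrite (ord1 i) -mulmxA Pperm_mul.
rewrite -!tDeltaE.
have -> : j = tau ((tau^-1)%g j) by rewrite permKV.
rewrite permK; symmetry; apply: (KR hom gz hD).
by rewrite HA Pdiag_mxE permK eqxx mul1r.
Qed.

Hypothesis ainj : forall x : 'cV[R]_n, A *m x = 0 -> x = 0.

Lemma col_nz k : exists j, A j k != 0.
Proof.
case: (boolP [exists j, A j k != 0]) => [/existsP //|/existsPn H].
have : A *m (delta_mx k 0 : 'cV[R]_n) = 0.
  apply/matrixP => j i; rewrite (ord1 i) -colE !mxE.
  by move: (H j); rewrite !mxE => /negPn/eqP.
move/ainj/matrixP => /(_ k 0) /eqP; rewrite !mxE !eqxx /= oner_eq0.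
by [].
Qed.

Lemma row_uniq j k k' : A j k != 0 -> A j k' != 0 -> k = k'.
Proof.
have [/andP[m1 _] [_ [_ _ _ Hdist]]] := hD.
pose i0 : 'I_m := Ordinal m1.
move=> /(KR hom gz hD (delta_mx i0 0)) H1 /(KR hom gz hD (delta_mx i0 0)) H2.
move: H1; rewrite -H2 !tDelta_delta => E.
apply/eqP; apply/negPn/negP => /(Hdist i0) ; by rewrite E eqxx.
Qed.

Definition sig k := odflt k [pick j | A j k != 0].

Lemma sigP k : A (sig k) k != 0.
Proof.
rewrite /sig; case: pickP => [j //|H].
by have [j] := col_nz k; rewrite H.
Qed.

Lemma sig_inj : injective sig.
Proof.
move=> k k' E; apply: (row_uniq (j := sig k)); first exact: sigP.
by rewrite E; exact: sigP.
Qed.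

Definition tauA : 'S_n := perm sig_inj.

Lemma A_supp j k : A j k != 0 -> j = tauA k.
Proof.
move=> nz.
have E : j = tauA ((tauA^-1)%g j) by rewrite permKV.
have nz' : A j ((tauA^-1)%g j) != 0.
  by rewrite {1}E /tauA permE; exact: sigP.
by rewrite (row_uniq nz nz') -E.
Qed.

Lemma A_mono : exists c : 'I_n -> R, (forall k, c k != 0) /\
  A = Pperm R tauA *m diag_mx (\row_k c k).
Proof.
exists (fun k => A (tauA k) k); split.
  by move=> k; rewrite permE; exact: sigP.
apply/matrixP => j k; rewrite Pdiag_mxE.
have [E|ne] := eqVneq ((tauA^-1)%g j) k.
  by rewrite -E permKV mul1r.
rewrite mul0r; apply/eqP; apply/negPn/negP => /A_supp E.
by move: ne; rewrite E permK eqxx.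
Qed.

End Mono.


Lemma mx_cvg_entry (R : realType) p q {T : Type} (F : set_system T) {FF : Filter F}
  (f : T -> 'M[R]_(p, q)) (L : 'M[R]_(p, q)) :
  (forall i j, (fun N => f N i j) @ F --> L i j) -> f @ F --> L.
Proof.
move=> H; apply/cvgrPdist_le => e e0.
have H' : forall ij : 'I_p * 'I_q, \forall N \near F, `|L ij.1 ij.2 - f N ij.1 ij.2| <= e.
  by move=> ij; move/cvgrPdist_le: (H ij.1 ij.2) => /(_ e e0).
have := filter_forall FF H'.
apply: filterS => N HN.
rewrite [leLHS]/Num.Def.normr/= mx_normrE (bigmax_le _ (ltW e0))//= => ij _.
by rewrite !mxE; exact: HN.
Qed.

Definition sgf (R : realType) (x : R) : R := if x == 0 then 1 else (expR x - 1) / x.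

Lemma sgf_prop (R : realType) (x : R) : sgf x * x = expR x - 1.
Proof.
rewrite /sgf; have [->|nz] := eqVneq x 0; first by rewrite mulr0 expR0 subrr.
by rewrite divfK.
Qed.

Lemma sig_cvg (R : realType) (x : R) :
  (fun N : nat => \sum_(k < N) ((k.+1)`!%:R)^-1 * x ^+ k) @ \oo --> sgf x.
Proof.
rewrite /sgf; have [->|nz] := eqVneq x 0.
  rewrite -cvg_shiftS /=.
  have -> : (fun N : nat => \sum_(k < N.+1) ((k.+1)`!%:R)^-1 * (0 : R) ^+ k) = fun _ => 1.
    apply: funext => N; rewrite big_ord_recl /= expr0 mulr1 invr1 big1 ?addr0 //.
    by move=> k _; rewrite expr0n /= mulr0.
  exact: cvg_cst.
have E : (fun N : nat => \sum_(k < N) ((k.+1)`!%:R)^-1 * x ^+ k) =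
         (fun N => (series (exp_coeff x) N.+1 - 1) * x^-1).
  apply: funext => N; rewrite [RHS]mulrC; rewrite /series /exp_coeff /= big_nat_recl // expr0 fact0 divr1.
  rewrite addrAC subrr add0r big_mkord mulr_sumr; apply: eq_bigr => k _.
  by rewrite exprS mulrA mulKf // mulrC.
rewrite E; apply: cvgMr_tmp; apply: cvgB; last exact: cvg_cst.
have := is_cvg_series_exp_coeff x; rewrite -cvg_shiftS => H.
exact: H.
Qed.


Lemma diag_mx_of (R : realType) n (D : 'M[R]_n) :
  is_diag_mx D -> D = diag_mx (\row_j D j j).
Proof.
move/is_diag_mxP => H; apply/matrixP => i j; rewrite !mxE.
by have [<-|ij] := eqVneq i j; rewrite ?mulr1n // H.
Qed.

Lemma diag_pow (R : realType) n (D : 'M[R]_n) k :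
  is_diag_mx D -> D ^+ k = diag_mx (\row_j D j j ^+ k).
Proof.
move=> Hd; elim: k => [|k IH].
  by rewrite expr0; apply/matrixP => a b; rewrite !mxE expr0.
rewrite exprS IH {1}(diag_mx_of Hd) -mulmxE mulmx_diag; congr diag_mx.
by apply/rowP => j; rewrite !mxE exprS.
Qed.

Lemma series_mx_cvg (R : realType) n (D : 'M[R]_n) : is_diag_mx D ->
  (fun N : nat => \sum_(k < N) ((k.+1)`!%:R)^-1 *: D ^+ k) @ \oo -->
  diag_mx (\row_j sgf (D j j)).
Proof.
move=> Hd; apply: mx_cvg_entry => i j.
have [<-|ij] := eqVneq i j.
  have E : (fun N : nat => (\sum_(k < N) ((k.+1)`!%:R)^-1 *: D ^+ k) i i) =
    (fun N : nat => \sum_(k < N) ((k.+1)`!%:R)^-1 * D i i ^+ k).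
    apply: funext => N; rewrite summxE; apply: eq_bigr => k _.
    by rewrite (diag_pow _ Hd) !mxE eqxx mulr1n.
  by rewrite E !mxE eqxx mulr1n; exact: sig_cvg.
have ij' : (i == j :> nat) = false by apply/negbTE.
have E : (fun N : nat => (\sum_(k < N) ((k.+1)`!%:R)^-1 *: D ^+ k) i j) = (fun _ => 0).
  apply: funext => N; rewrite summxE big1 // => k _.
  by rewrite (diag_pow _ Hd) !mxE ?ij' ?(negbTE ij) mulr0n mulr0.
by rewrite E !mxE ?ij' ?(negbTE ij) mulr0n; exact: cvg_cst.
Qed.

Lemma tDelta_diag (R : realType) n m (Delta : 'I_m -> 'M[R]_n) t :
  Delta_hyp Delta -> is_diag_mx (tDelta Delta t).
Proof.
move=> [_ [Hdg _]]; apply/is_diag_mxP => i j ij.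
rewrite /tDelta summxE big1 // => k _; rewrite mxE.
by move/is_diag_mxP: (Hdg k) => ->; rewrite ?mulr0.
Qed.


Lemma addE (R : realType) p (x y : 'cV[R]_p) j : (x + y) j 0 = x j 0 + y j 0.
Proof. by rewrite mxE. Qed.

Lemma diag_mulE (R : realType) p (d : 'rV[R]_p) (x : 'cV[R]_p) j :
  (diag_mx d *m x) j 0 = d 0 j * x j 0.
Proof. by rewrite mul_diag_mx mxE. Qed.

Section Beta.
Variables (R : realType) (n m : nat) (Delta : 'I_m -> 'M[R]_n).
Local Notation tD := (tDelta Delta).
Local Notation et := (Defs.eta Delta).
Local Notation Om := (Omega Delta).
Variable phi : 'cV[R]_n * 'cV[R]_m -> 'cV[R]_n * 'cV[R]_m.
Hypothesis hom : forall g h, phi (Gmul Delta g h) = Gmul Delta (phi g) (phi h).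
Hypothesis gz : forall x, (phi (x, 0)).2 = 0.
Hypothesis hD : Delta_hyp Delta.
Local Notation al x := (phi (x, 0)).1.
Local Notation be t := (phi (0, t)).1.
Local Notation de t := (phi (0, t)).2.
Variable tau : 'S_n.
Hypothesis Hde : forall t, Om *m de t = Pperm R tau *m Om *m t.

Lemma mu_eq t j : tD (de t) j j = tD t ((tau^-1)%g j) ((tau^-1)%g j).
Proof. by rewrite !tDeltaE Hde -mulmxA Pperm_mul. Qed.

Lemma be_form : exists U : 'M[R]_(n, m), forall t,
  be t = diag_mx (\row_j sgf (tD (de t) j j)) *m U *m t.
Proof.
have [/andP[m1 _] _] := hD.
pose i0 : 'I_m := Ordinal m1.
pose s0 : 'cV[R]_m := delta_mx i0 0.
pose E j t := expR (tD (de t) j j).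
have Hcoc j t s : (be t) j 0 + E j t * (be s) j 0 = (be s) j 0 + E j s * (be t) j 0.
  have := be_cocycle hom t s; rewrite addrC (be_cocycle hom s t).
  by move/matrixP => /(_ j 0); rewrite !addE !eta_mulE.
have nz j : E j s0 - 1 != 0.
  rewrite subr_eq0 /E mu_eq tDelta_delta -expR0; apply/negP => /eqP /expR_inj.
  by move/eqP; rewrite (negbTE (diag_nz hD _ _)).
pose v := \row_j ((be s0) j 0 / (E j s0 - 1)).
exists (diag_mx v *m Pperm R tau *m Om) => t.
apply/matrixP => j i; rewrite (ord1 i).
rewrite -!mulmxA !diag_mulE mulmxA -Hde -tDeltaE !mxE.
rewrite mulrCA mulrC sgf_prop.
have := Hcoc j t s0; rewrite /E => H.
have nz' := nz j; rewrite /E in nz'; apply: (mulIf nz'); rewrite -mulrA divfK //.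
lra.
Qed.

End Beta.


Lemma cont_sum (R : realType) (T : topologicalType) (I : Type) (r : seq I)
  (g : I -> T -> R) : (forall i, continuous (g i)) ->
  continuous (fun x => \sum_(i <- r) g i x).
Proof.
move=> Hg x; elim: r => [|a r IH].
  have -> : (fun y => \sum_(i <- [::]) g i y) = fun _ => 0.
    by apply: funext => y; rewrite big_nil.
  exact: cvg_cst.
have -> : (fun y => \sum_(i <- a :: r) g i y) = fun y => g a y + \sum_(i <- r) g i y.
  by apply: funext => y; rewrite big_cons.
apply: cvgD; [exact: Hg | exact: IH].
Qed.

Lemma mulmx_cont (R : realType) p q s (M : 'M[R]_(p, q)) :
  continuous (fun x : 'M[R]_(q, s) => M *m x).
Proof.
move=> x0; apply: (@mx_cvg_entry R p s _ (nbhs x0) _) => i j.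
have -> : (fun y : 'M[R]_(q, s) => (M *m y) i j) = fun y => \sum_k M i k * y k j.
  by apply: funext => y; rewrite mxE.
rewrite mxE.
have H : forall k, continuous (fun y : 'M[R]_(q, s) => M i k * y k j).
  move=> k y; apply: (@cvgMl_tmp R 'M[R]_(q,s) (nbhs y) _ (fun y => y k j) (M i k) (y k j)); exact: coord_continuous.
exact: (@cont_sum R 'M[R]_(q, s) 'I_q _ (fun k y => M i k * y k j) H x0).
Qed.


Lemma colEntry (R : realType) p q (A : 'M[R]_(p, q)) i j : (col j A) i 0 = A i j.
Proof. by rewrite mxE. Qed.

Lemma inj_unit (R : realType) p (M : 'M[R]_p) :
  (forall t : 'cV[R]_p, M *m t = 0 -> t = 0) -> M \in unitmx.
Proof.
move=> H; rewrite -unitmx_tr -row_free_unit -kermx_eq0; apply/eqP.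
set K := kermx _.
have HK : M *m K^T = 0.
  by rewrite -[M]trmxK -trmx_mul mulmx_ker trmx0.
apply: trmx_inj; rewrite trmx0; apply/matrixP => i j.
have Hc : col j K^T = 0 by apply: H; rewrite colE mulmxA HK mul0mx.
by move: Hc => /matrixP /(_ i 0); rewrite colEntry => ->; rewrite !mxE.

Qed.

Lemma Pperm_inj (R : realType) n (tau : 'S_n) (y : 'cV[R]_n) :
  Pperm R tau *m y = 0 -> y = 0.
Proof.
move/matrixP => H; apply/matrixP => k i; rewrite (ord1 i).
by have := H (tau k) 0; rewrite Pperm_mul permK !mxE.
Qed.

Unset Implicit Arguments.

Theorem mainTheorem2 (R : realType) (n m : nat) (Delta : 'I_m -> 'M[R]_n)
  (phi : 'cV[R]_n * 'cV[R]_m -> 'cV[R]_n * 'cV[R]_m) :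
  Delta_hyp Delta ->
  G_endo Delta phi ->
  let alpha := fun x : 'cV[R]_n => (phi (x, 0)).1 in
  let gamma := fun x : 'cV[R]_n => (phi (x, 0)).2 in
  let beta  := fun t : 'cV[R]_m => (phi (0, t)).1 in
  let delta := fun t : 'cV[R]_m => (phi (0, t)).2 in
  let Om := Omega Delta in
  G_auto Delta phi <->
  exists (c : 'I_n -> R) (tau : 'S_n) (U : 'M[R]_(n, m)),
    [/\ (forall k, c k != 0) /\
          (forall x, alpha x = (Pperm R tau *m diag_mx (\row_k c k)) *m x),
        (forall x, gamma x = 0),
        (forall t, delta t = (invmx (Om^T *m Om) *m Om^T *m Pperm R tau *m Om) *m t) &
        (forall t, exists S : 'M[R]_n,
           (fun N : nat => \sum_(k < N)
               ((k.+1)`!%:R)^-1 *: (tDelta Delta (delta t)) ^+ k) @ \oo --> S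
           /\ beta t = S *m U *m t)].
Proof.
move=> hD [phic hom] alpha gamma beta delta Om.
rewrite /alpha /gamma /beta /delta /Om; clear alpha gamma beta delta Om.
have gz := ga_zero hom hD.
split.
  move=> [_ [psi [_ c1 c2]]].
  have ainj : forall x : 'cV[R]_n, amx phi *m x = 0 -> x = 0.
    move=> x Hx.
    have : phi (x, 0) = phi (0, 0).
      by rewrite (phi_x gz) (phi00 hom) (al_lin hom gz hD) Hx.
    by move/(congr1 psi); rewrite !c1 => -[].
  have [c [cnz HA]] := A_mono hom gz hD ainj.
  set tau := tauA _ _ _ _ in HA.
  have Hde := de_formula hom gz hD cnz HA.
  have [U HU] := be_form hom hD Hde.
  exists c, tau, U; split.
  - split=> // x; by rewrite (al_lin hom gz hD) HA.
  - exact: gz.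
  - move=> t; apply/esym; rewrite -!mulmxA (mulmxA (Pperm R tau)) -Hde.
    by rewrite [X in _ *m X]mulmxA mulKmx // unit_OmTOm.
  - move=> t; exists (diag_mx (\row_j sgf (tDelta Delta (phi (0, t)).2 j j))); split.
      by apply: series_mx_cvg; apply: tDelta_diag.
    exact: HU.
move=> [c [tau [U [[cnz Hal] Hga Hdt Hbt]]]].
set A := Pperm R tau *m diag_mx (\row_k c k) in Hal.
set Md := invmx _ *m _ *m _ *m _ in Hdt.
have HA : amx phi = A.
  by apply: mx_ext => x; rewrite -(al_lin hom gz hD) Hal.
have Hde := de_formula hom gz hD cnz HA.
have Aunit : A \in unitmx.
  apply: inj_unit => x; rewrite /A -mulmxA => /Pperm_inj /matrixP H.
  apply/matrixP => k i; rewrite (ord1 i); move: (H k 0).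
  rewrite diag_mulE !mxE => /eqP; rewrite mulf_eq0 (negbTE (cnz k)) /= => /eqP.
  by [].
have Munit : Md \in unitmx.
  apply: inj_unit => t; rewrite -Hdt => H0.
  apply: (Om_inj hD); apply: (@Pperm_inj _ _ tau); rewrite mulmxA -Hde H0.
  by rewrite mulmx0.
have Hphi x t : phi (x, t) = (A *m x + (phi (0, t)).1, Md *m t).
  by rewrite (phi_xt hom gz) Hal Hdt.
pose psi (p : 'cV[R]_n * 'cV[R]_m) :=
  (invmx A *m (p.1 - (phi (0, invmx Md *m p.2)).1), invmx Md *m p.2).
have c1 : cancel phi psi.
  by move=> [x t]; rewrite Hphi /psi /= !mulKmx // addrK mulKmx.
have c2 : cancel psi phi.
  by move=> [y s]; rewrite /psi Hphi /= !mulKVmx // subrK.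
split; first by split.
exists psi; split => //; split; last first.
  by move=> g h; rewrite -{1}(c2 g) -{1}(c2 h) -hom c1.
have bcont : continuous (fun t : 'cV[R]_m => (phi (0, t)).1).
  move=> t.
  apply: (@continuous_comp _ _ _ (fun s => phi (0, s)) fst).
    apply: (@continuous_comp _ _ _ (fun s => ((0 : 'cV[R]_n), s)) phi).
      apply: (@cvg_pair _ _ _ (nbhs t) (nbhs (0 : 'cV[R]_n)) (nbhs t)); [exact: cvg_cst|exact: cvg_id].
    exact: phic.
  exact: cvg_fst.
have mdc : continuous (fun q : 'cV[R]_n * 'cV[R]_m => invmx Md *m q.2).
  move=> q; apply: (@continuous_comp _ _ _ snd (mulmx (invmx Md))).
    exact: cvg_snd.
  exact: mulmx_cont.
move=> p; rewrite /psi.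
apply: (@cvg_pair _ _ _ (nbhs p)
  (nbhs (invmx A *m (p.1 - (phi (0, invmx Md *m p.2)).1)))
  (nbhs (invmx Md *m p.2))); last exact: mdc.
apply: (@continuous_comp _ _ _ (fun q : 'cV[R]_n * 'cV[R]_m =>
  q.1 - (phi (0, invmx Md *m q.2)).1) (mulmx (invmx A))); last exact: mulmx_cont.
apply: cvgB; first exact: cvg_fst.
apply: (@continuous_comp _ _ _ (fun q : 'cV[R]_n * 'cV[R]_m => invmx Md *m q.2)
  (fun t => (phi (0, t)).1)); last exact: bcont.
exact: mdc.
Qed.
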